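(* Let $A,B$ be idempotent $\Gamma$-graded rings and ${}_AP_B$, ${}_BQ_A$ graded bimodules unital on both sides, such that there is a graded Morita context $(A,B,P,Q,\mu,\nu)$ with surjective trace maps. For every unital graded left $A$-module $U$, there is an isomorphism of graded left $B$-modules $B\cdot\mathrm{HOM}_A(P,U)\cong B\cdot\mathrm{HOM}_A(P,U/t_A(U))$.
   Context: $\Gamma$ is a fixed multiplicative group with identity $e$. Rings are associative $\Gamma$-graded, not necessarily unital; $A$ is idempotent if $A^2=A$; a module is unital if $AM=M$; $t_A(U)=\{u\in U: Au=0\}$. A left-linear $f$ is graded of degree $\sigma$ if $f(M_\tau)\subseteq N_{\tau\sigma}$; $\mathrm{HOM}$ is the direct sum over degrees; $\mathrm{HOM}_A(P,N)$ is a graded left $B$-module via $(bf)(p)=f(pb)$; $B\cdot H$ denotes finite sums $\sum b_ih_i$. A graded Morita context $(A,B,P,Q,\mu,\nu)$: idempotent graded rings $A,B$, graded bimodules ${}_AP_B$, ${}_BQ_A$ unital on both sides, degree-$e$ graded bimodule maps $\mu:P\otimes_BQ\to A$, $\langle p,q\rangle=\mu(p\otimes q)$, $\nu:Q\otimes_AP\to B$, $[q,p]=\nu(q\otimes p)$, with $p'[q,p]=\langle p',q\rangle p$ and $q'\langle p,q\rangle=[q',p]q$. *)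

(* Defs.v *)
(* Gamma-graded, not necessarily unital rings and modules,
   written as explicit operations on zmodTypes with Prop-valued axioms. *)
From mathcomp Require Import all_boot all_algebra.
From Stdlib Require List.
Set Implicit Arguments. Unset Strict Implicit. Unset Printing Implicit Defensive.
Import GRing.Theory.
Local Open Scope ring_scope.

Record group_law (G : Type) := GroupLaw {
  gmul : G -> G -> G;
  gunit : G;
  ginv : G -> G;
  gmulA : forall x y z, gmul x (gmul y z) = gmul (gmul x y) z;
  gmul1g : forall x, gmul gunit x = x;
  gmulVg : forall x, gmul (ginv x) x = gunit }.

Section Graded.
Variables (G : Type) (g : group_law G).

(* gr s = the homogeneous component M_s. *)
Definition is_grading (M : zmodType) (gr : G -> M -> Prop) : Prop :=
  (forall s, gr s 0 /\ (forall x y, gr s x -> gr s y -> gr s (x - y))) /\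
  (forall m : M, exists l : seq (G * M),
      (forall x, List.In x l -> gr x.1 x.2) /\ m = \sum_(x <- l) x.2) /\
  (forall l : seq (G * M), List.NoDup (map fst l) ->
      (forall x, List.In x l -> gr x.1 x.2) ->
      \sum_(x <- l) x.2 = 0 -> forall x, List.In x l -> x.2 = 0).

Definition is_graded_ring (A : zmodType) (grA : G -> A -> Prop)
    (mul : A -> A -> A) : Prop :=
  is_grading grA /\
  (forall x y z, mul x (mul y z) = mul (mul x y) z) /\
  (forall x y z, mul x (y + z) = mul x y + mul x z) /\
  (forall x y z, mul (x + y) z = mul x z + mul y z) /\
  (forall s t x y, grA s x -> grA t y -> grA (gmul g s t) (mul x y)).

Definition idempotent_ring (A : zmodType) (mul : A -> A -> A) : Prop :=
  forall a : A, exists l : seq (A * A), a = \sum_(x <- l) mul x.1 x.2.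

Definition is_graded_lmod (A : zmodType) (grA : G -> A -> Prop) (mulA : A -> A -> A)
    (M : zmodType) (grM : G -> M -> Prop) (act : A -> M -> M) : Prop :=
  is_grading grM /\
  (forall a m m', act a (m + m') = act a m + act a m') /\
  (forall a a' m, act (a + a') m = act a m + act a' m) /\
  (forall a a' m, act (mulA a a') m = act a (act a' m)) /\
  (forall s t a m, grA s a -> grM t m -> grM (gmul g s t) (act a m)).

Definition is_graded_rmod (B : zmodType) (grB : G -> B -> Prop) (mulB : B -> B -> B)
    (M : zmodType) (grM : G -> M -> Prop) (act : M -> B -> M) : Prop :=
  is_grading grM /\
  (forall m m' b, act (m + m') b = act m b + act m' b) /\
  (forall m b b', act m (b + b') = act m b + act m b') /\
  (forall m b b', act m (mulB b b') = act (act m b) b') /\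
  (forall s t m b, grM s m -> grB t b -> grM (gmul g s t) (act m b)).

Definition lunital (A M : zmodType) (act : A -> M -> M) : Prop :=
  forall m : M, exists l : seq (A * M), m = \sum_(x <- l) act x.1 x.2.

Definition runital (B M : zmodType) (act : M -> B -> M) : Prop :=
  forall m : M, exists l : seq (M * B), m = \sum_(x <- l) act x.1 x.2.

Definition is_unital_graded_bimod
    (A : zmodType) (grA : G -> A -> Prop) (mulA : A -> A -> A)
    (B : zmodType) (grB : G -> B -> Prop) (mulB : B -> B -> B)
    (M : zmodType) (grM : G -> M -> Prop)
    (lact : A -> M -> M) (ract : M -> B -> M) : Prop :=
  is_graded_lmod grA mulA grM lact /\ is_graded_rmod grB mulB grM ract /\
  (forall a m b, ract (lact a m) b = lact a (ract m b)) /\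
  lunital lact /\ runital ract.

(* A degree-e graded bimodule map
   mu : P (x)_B Q -> A is given, via the universal property of the tensor
   product, by the B-balanced biadditive map <p,q> = mu (p (x) q). *)
Definition graded_morita_context
    (A : zmodType) (grA : G -> A -> Prop) (mulA : A -> A -> A)
    (B : zmodType) (grB : G -> B -> Prop) (mulB : B -> B -> B)
    (P : zmodType) (grP : G -> P -> Prop) (lP : A -> P -> P) (rP : P -> B -> P)
    (Q : zmodType) (grQ : G -> Q -> Prop) (lQ : B -> Q -> Q) (rQ : Q -> A -> Q)
    (mu : P -> Q -> A) (nu : Q -> P -> B) : Prop :=
  (forall p p' q, mu (p + p') q = mu p q + mu p' q) /\
  (forall p q q', mu p (q + q') = mu p q + mu p q') /\
  (forall p b q, mu (rP p b) q = mu p (lQ b q)) /\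
  (forall a p q, mu (lP a p) q = mulA a (mu p q)) /\
  (forall p q a, mu p (rQ q a) = mulA (mu p q) a) /\
  (forall s t p q, grP s p -> grQ t q -> grA (gmul g s t) (mu p q)) /\
  (forall q q' p, nu (q + q') p = nu q p + nu q' p) /\
  (forall q p p', nu q (p + p') = nu q p + nu q p') /\
  (forall q a p, nu (rQ q a) p = nu q (lP a p)) /\
  (forall b q p, nu (lQ b q) p = mulB b (nu q p)) /\
  (forall q p b, nu q (rP p b) = mulB (nu q p) b) /\
  (forall s t q p, grQ s q -> grP t p -> grB (gmul g s t) (nu q p)) /\
  (forall p' q p, rP p' (nu q p) = lP (mu p' q) p) /\
  (forall q' p q, rQ q' (mu p q) = lQ (nu q' p) q).

(* surjectivity of the trace maps: the image of P (x)_B Q consists of the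
   finite sums of elements <p,q> *)
Definition mu_surjective (A P Q : zmodType) (mu : P -> Q -> A) : Prop :=
  forall a : A, exists l : seq (P * Q), a = \sum_(x <- l) mu x.1 x.2.

Definition torsion (A U : zmodType) (act : A -> U -> U) (u : U) : Prop :=
  forall a : A, act a u = 0.

Definition is_lhom (A P N : zmodType) (actP : A -> P -> P) (actN : A -> N -> N)
    (f : P -> N) : Prop :=
  (forall p p', f (p + p') = f p + f p') /\ (forall a p, f (actP a p) = actN a (f p)).

Definition graded_deg (P N : zmodType) (grP : G -> P -> Prop) (grN : G -> N -> Prop)
    (f : P -> N) (s : G) : Prop :=
  forall t p, grP t p -> grN (gmul g t s) (f p).

(* HOM_A(P,N) = (+)_s HOM_A(P,N)_s, realized inside the maps P -> N *)
Definition HOM (A P N : zmodType) (actP : A -> P -> P) (actN : A -> N -> N)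
    (grP : G -> P -> Prop) (grN : G -> N -> Prop) (f : P -> N) : Prop :=
  exists l : seq (G * (P -> N)),
    (forall x, List.In x l -> is_lhom actP actN x.2 /\ graded_deg grP grN x.2 x.1) /\
    f = (fun p => \sum_(x <- l) x.2 p).

Definition Bact (B P N : zmodType) (rP : P -> B -> P) (b : B) (f : P -> N) : P -> N :=
  fun p => f (rP p b).

Definition BHOM (A B P N : zmodType) (actP : A -> P -> P) (rP : P -> B -> P)
    (actN : A -> N -> N) (grP : G -> P -> Prop) (grN : G -> N -> Prop)
    (f : P -> N) : Prop :=
  exists l : seq (B * (P -> N)),
    (forall x, List.In x l -> HOM actP actN grP grN x.2) /\
    f = (fun p => \sum_(x <- l) Bact rP x.1 x.2 p).

Definition graded_Bmod_iso (B P U V : zmodType) (rP : P -> B -> P)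
    (grP : G -> P -> Prop) (grU : G -> U -> Prop) (grV : G -> V -> Prop)
    (X : (P -> U) -> Prop) (Y : (P -> V) -> Prop)
    (phi : (P -> U) -> (P -> V)) (psi : (P -> V) -> (P -> U)) : Prop :=
  (forall f, X f -> Y (phi f)) /\ (forall h, Y h -> X (psi h)) /\
  (forall f, X f -> psi (phi f) = f) /\ (forall h, Y h -> phi (psi h) = h) /\
  (forall f f', X f -> X f' -> phi (fun p => f p + f' p) = (fun p => phi f p + phi f' p)) /\
  (forall h h', Y h -> Y h' -> psi (fun p => h p + h' p) = (fun p => psi h p + psi h' p)) /\
  (forall b f, X f -> phi (Bact rP b f) = Bact rP b (phi f)) /\
  (forall b h, Y h -> psi (Bact rP b h) = Bact rP b (psi h)) /\
  (forall s f, X f -> graded_deg grP grU f s -> graded_deg grP grV (phi f) s) /\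
  (forall s h, Y h -> graded_deg grP grV h s -> graded_deg grP grU (psi h) s).

End Graded.

(* Main.v *)
Require Import Defs.
From mathcomp Require Import all_boot all_algebra.
From Stdlib Require Import ClassicalEpsilon FunctionalExtensionality.
From Stdlib Require List.
Set Implicit Arguments. Unset Strict Implicit. Unset Printing Implicit Defensive.
Import GRing.Theory.
Local Open Scope ring_scope.

Lemma sum_morph (M N : zmodType) (f : M -> N) :
  (forall x y, f (x + y) = f x + f y) ->
  forall I (l : seq I) (Pr : pred I) F,
  f (\sum_(i <- l | Pr i) F i) = \sum_(i <- l | Pr i) f (F i).
Proof.
move=> hf I l Pr F.
have f0 : f 0 = 0 by apply/(addrI (f 0)); rewrite -hf !addr0.
exact: (big_morph f hf f0).
Qed.

Lemma sum_In0 (M : zmodType) I (l : seq I) (Pr : pred I) (F : I -> M) :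
  (forall i, List.In i l -> F i = 0) -> \sum_(i <- l | Pr i) F i = 0.
Proof.
elim: l => [|x l IH] H; first by rewrite big_nil.
rewrite big_cons IH; last by move=> i Hi; apply: H; right.
by rewrite H /=; [case: (Pr x); rewrite ?addr0 | left].
Qed.

Section Grading.
Variables (G : Type) (M : zmodType) (gr : G -> M -> Prop).
Hypothesis gz : forall s, gr s 0.
Hypothesis gsub : forall s x y, gr s x -> gr s y -> gr s (x - y).

Lemma gr_opp s x : gr s x -> gr s (- x).
Proof. by move=> h; rewrite -sub0r; apply: gsub. Qed.

Lemma gr_add s x y : gr s x -> gr s y -> gr s (x + y).
Proof. by move=> hx hy; rewrite -[y]opprK; apply: gsub => //; apply: gr_opp. Qed.

Lemma gr_sum s I (l : seq I) (Pr : pred I) (F : I -> M) :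
  (forall i, List.In i l -> Pr i -> gr s (F i)) -> gr s (\sum_(i <- l | Pr i) F i).
Proof.
elim: l => [|x l IH] H; first by rewrite big_nil.
rewrite big_cons.
have IH' : gr s (\sum_(i <- l | Pr i) F i) by apply: IH => i Hi; apply: H; right.
case Hx: (Pr x) => //=; apply: gr_add => //; apply: H => //; by left.
Qed.
End Grading.

Definition eqG (G : Type) (x y : G) : bool :=
  if excluded_middle_informative (x = y) then true else false.

Lemma eqGP (G : Type) (x y : G) : reflect (x = y) (eqG x y).
Proof. by rewrite /eqG; case: excluded_middle_informative => h; constructor. Qed.

Lemma eqGxx (G : Type) (x : G) : eqG x x.
Proof. exact/eqGP. Qed.

Lemma NoDup_filter (G T : Type) (p : pred (G * T)) (l : seq (G * T)) :
  List.NoDup (map fst l) -> List.NoDup (map fst (filter p l)).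
Proof.
elim: l => [|x l IH] //= H; inversion H; subst.
case: (p x) => /=; last exact: IH.
constructor; last exact: IH.
move=> Hin; apply: H2; move: Hin; clear -l.
elim: l => [|y l IH] //=; case: (p y) => /=; last by move=> h; right; apply: IH.
by case=> [->|h]; [left|right; apply: IH].
Qed.

Lemma notin_filter (G T : Type) (s : G) (l : seq (G * T)) :
  ~ List.In s (map fst (filter (fun y => ~~ eqG y.1 s) l)).
Proof.
elim: l => [|y l IH] //=; case E: (eqG y.1 s) => //=.
by case=> // h; move: E; rewrite h eqGxx.
Qed.

Section Group.
Variables (M : zmodType) (G : Type) (gr : G -> M -> Prop).
Hypothesis gz : forall s, gr s 0.
Hypothesis gsub : forall s x y, gr s x -> gr s y -> gr s (x - y).
Hypothesis guniq : forall l : seq (G * M), List.NoDup (map fst l) ->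
      (forall x, List.In x l -> gr x.1 x.2) ->
      \sum_(x <- l) x.2 = 0 -> forall x, List.In x l -> x.2 = 0.

Lemma grouping (l : seq (G * M)) : (forall x, List.In x l -> gr x.1 x.2) ->
  exists l', List.NoDup (map fst l') /\ (forall x, List.In x l' -> gr x.1 x.2) /\
   forall D : pred G, \sum_(x <- l | D x.1) x.2 = \sum_(x <- l' | D x.1) x.2.
Proof.
elim: l => [|[s m] l IH] H.
  by exists [::]; split; [constructor | split => // D; rewrite !big_nil].
case: IH => [x Hx|g [Hnd [Hg Hs]]]; first by apply: H; right.
exists ((s, m + \sum_(y <- g | eqG y.1 s) y.2) :: filter (fun y => ~~ eqG y.1 s) g).
split.
  rewrite /=; constructor; [exact: (@notin_filter G M s g) | exact: NoDup_filter].
split.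
  move=> x /= [<-|].
    rewrite /=; apply: gr_add => //; first by apply: (H (s, m)); left.
    by apply: gr_sum => // i Hi /eqGP <-; exact: Hg.
  move=> Hin; apply: Hg; move: Hin; clear; elim: g => [|y g IH] //=.
  by case: (~~ eqG y.1 s) => /=; [case=> [->|h]; [left|right; apply: IH] | move=> h; right; apply: IH].
move=> D; rewrite !big_cons /= big_filter_cond Hs (bigID (fun y => eqG y.1 s)) /=.
case Ds: (D s).
  rewrite -addrA; congr (_ + _); congr (_ + _).
    by apply: eq_bigl => y; case E: (eqG y.1 s); rewrite ?andbF ?andbT //; move/eqGP: E => ->.
  by apply: eq_bigl => y; rewrite andbC.
rewrite big_pred0; last by move=> y; case E: (eqG y.1 s); rewrite ?andbF ?andbT //; move/eqGP: E => ->.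
by rewrite add0r; apply: eq_bigl => y; rewrite andbC.
Qed.

Lemma key (l : seq (G * M)) s : (forall x, List.In x l -> gr x.1 x.2) ->
  gr s (\sum_(x <- l) x.2) -> \sum_(x <- l | ~~ eqG x.1 s) x.2 = 0.
Proof.
move=> Hl Hs.
have H' : forall x, List.In x ((s, - \sum_(x <- l) x.2) :: l) -> gr x.1 x.2.
  by move=> x /= [<-|]; [apply: gr_opp | apply: Hl].
case: (grouping H') => g [Hnd [Hg Hsum]].
have g0 : forall x, List.In x g -> x.2 = 0.
  apply: guniq => //; have := Hsum predT; rewrite big_cons /= => <-.
  by rewrite addNr.
have := Hsum (fun y => ~~ eqG y s); rewrite big_cons /= eqGxx /= => ->.
exact: sum_In0.
Qed.
End Group.
Section Span.
Variables (X : Type) (N : zmodType) (T : Type) (Ok : T -> Prop) (F : T -> X -> N).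

Definition SpanF (f : X -> N) := exists l : seq T,
  (forall x, List.In x l -> Ok x) /\ f = (fun p => \sum_(x <- l) F x p).

Lemma SpanF_0 : SpanF (fun _ => 0).
Proof. by exists [::]; split => //; apply: functional_extensionality => p; rewrite big_nil. Qed.

Lemma SpanF_add f f' : SpanF f -> SpanF f' -> SpanF (fun p => f p + f' p).
Proof.
move=> [l [Hl ->]] [l' [Hl' ->]]; exists (l ++ l'); split.
  by move=> x Hx; case: (List.in_app_or _ _ _ Hx) => ?; [apply: Hl | apply: Hl'].
by apply: functional_extensionality => p; rewrite big_cat.
Qed.

Lemma SpanF_single x : Ok x -> SpanF (F x).
Proof.
move=> h; exists [:: x]; split; first by move=> y [<-|].
by apply: functional_extensionality => p; rewrite big_seq1.
Qed.

Lemma SpanF_sum I (l : seq I) (H : I -> X -> N) :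
  (forall i, List.In i l -> SpanF (H i)) -> SpanF (fun p => \sum_(i <- l) H i p).
Proof.
elim: l => [|i l IH] Hs.
  have -> : (fun p : X => \sum_(i <- [::]) H i p) = (fun _ => 0)
    by apply: functional_extensionality => p; rewrite big_nil.
  exact: SpanF_0.
have -> : (fun p : X => \sum_(j <- i :: l) H j p) = (fun p => H i p + \sum_(j <- l) H j p)
  by apply: functional_extensionality => p; rewrite big_cons.
apply: SpanF_add; first by apply: Hs; left.
by apply: IH => j Hj; apply: Hs; right.
Qed.

Lemma SpanF_ind (Pr : (X -> N) -> Prop) :
  Pr (fun _ => 0) -> (forall h h', Pr h -> Pr h' -> Pr (fun p => h p + h' p)) ->
  (forall x, Ok x -> Pr (F x)) -> forall f, SpanF f -> Pr f.
Proof.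
move=> H0 Hadd Hx f [l [Hl ->]]; elim: l Hl => [|x l IH] Hl.
  have -> : (fun p : X => \sum_(x <- [::]) F x p) = (fun _ => 0)
    by apply: functional_extensionality => p; rewrite big_nil.
  exact: H0.
have -> : (fun p : X => \sum_(y <- x :: l) F y p) = (fun p => F x p + \sum_(y <- l) F y p)
  by apply: functional_extensionality => p; rewrite big_cons.
apply: Hadd; first by apply: Hx; apply: Hl; left.
by apply: IH => y Hy; apply: Hl; right.
Qed.
End Span.
Lemma addB (M N : zmodType) (f : M -> N) :
  (forall x y, f (x + y) = f x + f y) -> forall x y, f (x - y) = f x - f y.
Proof.
move=> hf x y.
have f0 : f 0 = 0 by apply/(addrI (f 0)); rewrite -hf !addr0.
have fN : f (- y) = - f y by apply/(addrI (f y)); rewrite -hf !subrr.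
by rewrite hf fN.
Qed.

Lemma add0 (M N : zmodType) (f : M -> N) :
  (forall x y, f (x + y) = f x + f y) -> f 0 = 0.
Proof. by move=> hf; apply/(addrI (f 0)); rewrite -hf !addr0. Qed.

Lemma In_map (S T : Type) (f : S -> T) (l : seq S) y :
  List.In y (map f l) -> exists x, List.In x l /\ y = f x.
Proof.
elim: l => [|x l IH] //= [<-|h]; first by exists x; split => //; left.
by case: (IH h) => z [Hz ->]; exists z; split => //; right.
Qed.

Section Main.
Variables (G : Type) (g : group_law G).
Variables (A : zmodType) (grA : G -> A -> Prop) (mulA : A -> A -> A).
Variables (B : zmodType) (mulB : B -> B -> B).
Variables (P : zmodType) (grP : G -> P -> Prop) (lP : A -> P -> P) (rP : P -> B -> P).
Variables (Q : zmodType) (grQ : G -> Q -> Prop) (lQ : B -> Q -> Q).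
Variables (mu : P -> Q -> A) (nu : Q -> P -> B).
Variables (U : zmodType) (grU : G -> U -> Prop) (lU : A -> U -> U).
Variables (V : zmodType) (grV : G -> V -> Prop) (lV : A -> V -> V).
Variable pi : U -> V.

Local Notation gm := (gmul g).

Hypothesis grPdec : forall m : P, exists l : seq (G * P),
      (forall x, List.In x l -> grP x.1 x.2) /\ m = \sum_(x <- l) x.2.
Hypothesis grQdec : forall m : Q, exists l : seq (G * Q),
      (forall x, List.In x l -> grQ x.1 x.2) /\ m = \sum_(x <- l) x.2.
Hypothesis grUdec : forall m : U, exists l : seq (G * U),
      (forall x, List.In x l -> grU x.1 x.2) /\ m = \sum_(x <- l) x.2.
Hypothesis grVdec : forall m : V, exists l : seq (G * V),
      (forall x, List.In x l -> grV x.1 x.2) /\ m = \sum_(x <- l) x.2.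
Hypothesis grUz : forall s, grU s 0 /\ (forall x y, grU s x -> grU s y -> grU s (x - y)).
Hypothesis grVz : forall s, grV s 0 /\ (forall x y, grV s x -> grV s y -> grV s (x - y)).
Hypothesis grVuniq : forall l : seq (G * V), List.NoDup (map fst l) ->
      (forall x, List.In x l -> grV x.1 x.2) ->
      \sum_(x <- l) x.2 = 0 -> forall x, List.In x l -> x.2 = 0.
Hypothesis rP_adp : forall (m m' : P) b, rP (m + m') b = rP m b + rP m' b.
Hypothesis rP_adb : forall m (b b' : B), rP m (b + b') = rP m b + rP m b'.
Hypothesis rP_mul : forall m b b', rP m (mulB b b') = rP (rP m b) b'.
Hypothesis lP_comp : forall a m b, rP (lP a m) b = lP a (rP m b).
Hypothesis P_lunit : lunital lP.
Hypothesis Q_lunit : lunital lQ.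
Hypothesis mu_addp : forall p p' q, mu (p + p') q = mu p q + mu p' q.
Hypothesis mu_addq : forall p q q', mu p (q + q') = mu p q + mu p q'.
Hypothesis mu_rP : forall p b q, mu (rP p b) q = mu p (lQ b q).
Hypothesis mu_lP : forall a p q, mu (lP a p) q = mulA a (mu p q).
Hypothesis mu_gr : forall s t p q, grP s p -> grQ t q -> grA (gm s t) (mu p q).
Hypothesis assocP : forall p' q p, rP p' (nu q p) = lP (mu p' q) p.
Hypothesis hnu : mu_surjective nu.
Hypothesis lU_addm : forall a m m', lU a (m + m') = lU a m + lU a m'.
Hypothesis lU_adda : forall a a' m, lU (a + a') m = lU a m + lU a' m.
Hypothesis lU_mul : forall a a' m, lU (mulA a a') m = lU a (lU a' m).
Hypothesis lU_gr : forall s t a m, grA s a -> grU t m -> grU (gm s t) (lU a m).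
Hypothesis lV_addm : forall a m m', lV a (m + m') = lV a m + lV a m'.
Hypothesis lV_adda : forall a a' m, lV (a + a') m = lV a m + lV a' m.
Hypothesis lV_gr : forall s t a m, grA s a -> grV t m -> grV (gm s t) (lV a m).
Hypothesis pi_add : forall p p', pi (p + p') = pi p + pi p'.
Hypothesis pi_lin : forall a p, pi (lU a p) = lV a (pi p).
Hypothesis hpig : graded_deg g grU grV pi (gunit g).
Hypothesis hpis : forall v : V, exists u : U, pi u = v.
Hypothesis hpik : forall u : U, pi u = 0 <-> torsion lU u.

Lemma gmulV x : gm x (ginv g x) = gunit g.
Proof.
set y := ginv g x.
transitivity (gm (gm (ginv g y) y) (gm x y)); first by rewrite gmulVg gmul1g.
rewrite -gmulA (gmulA g y x y).
by rewrite /y gmulVg gmul1g gmulVg.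
Qed.

Lemma gmul1 x : gm x (gunit g) = x.
Proof. by rewrite -(gmulVg g x) gmulA gmulV gmul1g. Qed.

Lemma gcancel t x y : gm t x = gm t y -> x = y.
Proof.
move=> h; rewrite -(gmul1g g x) -(gmul1g g y) -(gmulVg g t) -!gmulA.
by rewrite h.
Qed.

Lemma eqG_cancel t x y : eqG (gm t x) (gm t y) = eqG x y.
Proof.
by apply/eqGP/eqGP => [/gcancel|->].
Qed.

Let BH_U := BHOM g lP rP lU grP grU.
Let BH_V := BHOM g lP rP lV grP grV.

Lemma HOM_Alin (N : zmodType) (grN : G -> N -> Prop) (lN : A -> N -> N) :
  (forall a x y, lN a (x + y) = lN a x + lN a y) ->
  forall f, HOM g lP lN grP grN f -> is_lhom lP lN f.
Proof.
move=> hN f Hf.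
apply: (@SpanF_ind P N (G * (P -> N)) (fun x => is_lhom lP lN x.2 /\ graded_deg g grP grN x.2 x.1)
   (fun x => x.2) (is_lhom lP lN)) Hf.
- by split => [p p'|a p]; rewrite ?addr0 // (add0 (hN a)).
- move=> h h' [h1 h2] [h1' h2']; split => [p p'|a p].
    by rewrite h1 h1' addrACA.
  by rewrite h2 h2' hN.
- by move=> x [].
Qed.

Lemma Bact_Alin (N : zmodType) (lN : A -> N -> N) b f :
  is_lhom lP lN f -> is_lhom lP lN (Bact rP b f).
Proof.
move=> [h1 h2]; split => [p p'|a p]; rewrite /Bact.
  by rewrite rP_adp h1.
by rewrite lP_comp h2.
Qed.

Lemma BHOM_Alin (N : zmodType) (grN : G -> N -> Prop) (lN : A -> N -> N) :
  (forall a x y, lN a (x + y) = lN a x + lN a y) ->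
  forall f, BHOM g lP rP lN grP grN f -> is_lhom lP lN f.
Proof.
move=> hN f Hf.
apply: (@SpanF_ind P N (B * (P -> N)) (fun x => HOM g lP lN grP grN x.2)
   (fun x => Bact rP x.1 x.2) (is_lhom lP lN)) Hf.
- by split => [p p'|a p]; rewrite ?addr0 // (add0 (hN a)).
- move=> h h' [h1 h2] [h1' h2']; split => [p p'|a p].
    by rewrite h1 h1' addrACA.
  by rewrite h2 h2' hN.
- move=> x Hx /=; apply: Bact_Alin; exact: (HOM_Alin hN Hx).
Qed.

Lemma BHOM_add (N : zmodType) (grN : G -> N -> Prop) (lN : A -> N -> N) f f' :
  BHOM g lP rP lN grP grN f -> BHOM g lP rP lN grP grN f' ->
  BHOM g lP rP lN grP grN (fun p => f p + f' p).
Proof. exact: SpanF_add. Qed.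

Lemma BHOM_Bact (N : zmodType) (grN : G -> N -> Prop) (lN : A -> N -> N) b f :
  BHOM g lP rP lN grP grN f -> BHOM g lP rP lN grP grN (Bact rP b f).
Proof.
move=> [l [Hl ->]]; exists (map (fun x => (mulB b x.1, x.2)) l); split.
  by move=> y Hin; case: (In_map Hin) => x [Hx ->] /=; exact: (Hl x Hx).
apply: functional_extensionality => p; rewrite /Bact big_map /=.
by apply: eq_bigr => x _; rewrite rP_mul.
Qed.

Lemma phi_BHOM f : BH_U f -> BH_V (fun p => pi (f p)).
Proof.
move=> [l [Hl ->]].
exists (map (fun x => (x.1, fun p => pi (x.2 p))) l); split.
  move=> y Hin; case: (In_map Hin) => x [Hx ->] /=.
  case: (Hl x Hx) => k [Hk ->].
  exists (map (fun z => (z.1, fun p => pi (z.2 p))) k); split.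
    move=> w Hin2; case: (In_map Hin2) => z [Hz ->] /=.
    case: (Hk z Hz) => [[z1 z2] z3]; split; first split.
    - by move=> p p'; rewrite z1 pi_add.
    - by move=> a p; rewrite z2 pi_lin.
    - by move=> t p Hp; rewrite -(gmul1 (gm t z.1)); apply: hpig; apply: z3.
  apply: functional_extensionality => p.
  by rewrite /= (sum_morph pi_add) big_map.
apply: functional_extensionality => p.
rewrite /= (sum_morph pi_add) big_map /Bact /=; apply: eq_bigr => x _; by [].
Qed.

Lemma tors0 f : is_lhom lP lU f -> (forall p, torsion lU (f p)) -> forall p, f p = 0.
Proof.
move=> [h1 h2] ht p; case: (P_lunit p) => l ->.
rewrite (sum_morph h1); apply: sum_In0 => x _.
by rewrite h2 ht.
Qed.

Lemma inj f f' : BH_U f -> BH_U f' -> (forall p, pi (f p) = pi (f' p)) -> f = f'.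
Proof.
move=> Hf Hf' He.
case: (BHOM_Alin lU_addm Hf) => f1 f2; case: (BHOM_Alin lU_addm Hf') => f1' f2'.
have Hd : is_lhom lP lU (fun p => f p - f' p).
  split => [p p'|a p]; first by rewrite f1 f1' opprD addrACA.
  by rewrite f2 f2' (addB (lU_addm a)).
have Ht : forall p, torsion lU (f p - f' p).
  by move=> p; apply/hpik; rewrite (addB pi_add) He subrr.
apply: functional_extensionality => p; apply/eqP; rewrite -subr_eq0; apply/eqP.
exact: (tors0 Hd Ht).
Qed.
Definition KV (x : (G * Q) * (G * V)) : P -> V := fun p => lV (mu p x.1.2) x.2.2.
Definition OkV (x : (G * Q) * (G * V)) : Prop := grQ x.1.1 x.1.2 /\ grV x.2.1 x.2.2.
Let HR := SpanF OkV KV.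

Lemma HR_qv q v : HR (fun p => lV (mu p q) v).
Proof.
case: (grQdec q) => lq [Hlq ->]; case: (grVdec v) => lv [Hlv ->].
have -> : (fun p => lV (mu p (\sum_(x <- lq) x.2)) (\sum_(x <- lv) x.2)) =
   (fun p => \sum_(i <- lq) (fun p => \sum_(j <- lv) KV (i, j) p) p).
  apply: functional_extensionality => p /=.
  rewrite (sum_morph (mu_addq p)) (sum_morph (fun a a' => lV_adda a a' _)).
  apply: eq_bigr => i _; rewrite (sum_morph (lV_addm _)).
  by apply: eq_bigr.
apply: SpanF_sum => i Hi; apply: SpanF_sum => j Hj; apply: SpanF_single.
by split; [apply: Hlq | apply: Hlv].
Qed.

Lemma BHOMV_HR h : BH_V h -> HR h.
Proof.
apply: (@SpanF_ind P V (B * (P -> V)) (fun x => HOM g lP lV grP grV x.2)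
   (fun x => Bact rP x.1 x.2) HR).
- exact: SpanF_0.
- by move=> h1 h2; apply: SpanF_add.
move=> [b k] /= Hk.
case: (HOM_Alin lV_addm Hk) => k1 k2.
case: (hnu b) => l ->.
have -> : Bact rP (\sum_(x <- l) nu x.1 x.2) k =
   (fun p => \sum_(y <- l) (fun p => lV (mu p y.1) (k y.2)) p).
  apply: functional_extensionality => p; rewrite /Bact.
  rewrite (sum_morph (rP_adb p)) (sum_morph k1).
  by apply: eq_bigr => y _; rewrite assocP k2.
by apply: SpanF_sum => y _; apply: HR_qv.
Qed.

Lemma lift v s : grV s v -> exists u, grU s u /\ pi u = v.
Proof.
move=> Hv; case: (hpis v) => u0 Hu0.
case: (grUdec u0) => l [Hl Hsum].
have Hl' : forall x, List.In x (map (fun x => (x.1, pi x.2)) l) -> grV x.1 x.2.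
  move=> y Hin; case: (In_map Hin) => x [Hx ->] /=.
  by rewrite -(gmul1 x.1); apply: hpig; apply: Hl.
have Hk := key (fun s => (grVz s).1) (fun s => (grVz s).2) grVuniq Hl'.
have Hs : grV s (\sum_(x <- map (fun x => (x.1, pi x.2)) l) x.2).
  by rewrite big_map /= -(sum_morph pi_add) -Hsum Hu0.
move: (Hk s Hs); rewrite big_map /= => H0.
exists (\sum_(x <- l | eqG x.1 s) x.2); split.
  apply: gr_sum; [exact: (fun s => (grUz s).1) | exact: (fun s => (grUz s).2) |].
  by move=> x Hx /eqGP <-; apply: Hl.
rewrite -Hu0 Hsum (sum_morph pi_add) [in RHS](sum_morph pi_add).
by rewrite [in RHS](bigID (fun x => eqG x.1 s)) /= H0 addr0.
Qed.

Lemma lift_list (l : seq ((G * Q) * (G * V))) : (forall x, List.In x l -> OkV x) ->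
  exists lu : seq ((G * Q) * (G * U)),
    (forall x, List.In x lu -> grQ x.1.1 x.1.2 /\ grU x.2.1 x.2.2) /\
    l = map (fun x => (x.1, (x.2.1, pi x.2.2))) lu.
Proof.
elim: l => [|x l IH] Hl; first by exists [::].
case: IH => [y Hy|lu [Hlu ->]]; first by apply: Hl; right.
case: (Hl x (or_introl erefl)) => Hq Hv.
case: (lift Hv) => u [Hu Hpu].
exists ((x.1, (x.2.1, u)) :: lu); split.
  by move=> y /= [<-|]; [split | apply: Hlu].
by rewrite /= Hpu -!surjective_pairing.
Qed.

Lemma HOM_qu q u : HOM g lP lU grP grU (fun p => lU (mu p q) u).
Proof.
case: (grQdec q) => lq [Hlq ->]; case: (grUdec u) => lu [Hlu ->].
have -> : (fun p => lU (mu p (\sum_(x <- lq) x.2)) (\sum_(x <- lu) x.2)) =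
   (fun p => \sum_(i <- lq) (fun p => \sum_(j <- lu)
       (fun x : G * (P -> U) => x.2) (gm i.1 j.1, fun p => lU (mu p i.2) j.2) p) p).
  apply: functional_extensionality => p /=.
  rewrite (sum_morph (mu_addq p)) (sum_morph (fun a a' => lU_adda a a' _)).
  apply: eq_bigr => i _; rewrite (sum_morph (lU_addm _)).
  by apply: eq_bigr.
apply: SpanF_sum => i Hi; apply: SpanF_sum => j Hj.
apply: (@SpanF_single P U (G * (P -> U))
  (fun x => is_lhom lP lU x.2 /\ graded_deg g grP grU x.2 x.1) snd
  (gm i.1 j.1, fun p => lU (mu p i.2) j.2)).
split; first split => /=.
- by move=> p p'; rewrite mu_addp lU_adda.
- by move=> a p; rewrite mu_lP lU_mul.
move=> t p Hp /=; rewrite gmulA; apply: lU_gr; first by apply: mu_gr; [exact: Hp | apply: Hlq].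
exact: Hlu.
Qed.

Lemma BHOM_qu q u : BH_U (fun p => lU (mu p q) u).
Proof.
case: (Q_lunit q) => l ->.
have -> : (fun p => lU (mu p (\sum_(x <- l) lQ x.1 x.2)) u) =
   (fun p => \sum_(y <- l) (fun x : B * (P -> U) => Bact rP x.1 x.2) (y.1, fun p => lU (mu p y.2) u) p).
  apply: functional_extensionality => p /=.
  rewrite (sum_morph (mu_addq p)) (sum_morph (fun a a' => lU_adda a a' _)).
  by apply: eq_bigr => y _; rewrite /Bact mu_rP.
apply: SpanF_sum => y _.
apply: (@SpanF_single P U (B * (P -> U)) (fun x => HOM g lP lU grP grU x.2)
  (fun x => Bact rP x.1 x.2) (y.1, fun p => lU (mu p y.2) u)).
exact: HOM_qu.
Qed.
Lemma exist_lift h : BH_V h -> exists f, BH_U f /\ (fun p => pi (f p)) = h /\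
   forall s, graded_deg g grP grV h s -> graded_deg g grP grU f s.
Proof.
move=> Hh; case: (BHOMV_HR Hh) => l [Hl Eh].
case: (lift_list Hl) => lu [Hlu El]; subst l.
have gUz := fun s => (grUz s).1; have gUs := fun s => (grUz s).2.
have gVz := fun s => (grVz s).1; have gVs := fun s => (grVz s).2.
pose f := fun p => \sum_(x <- lu) lU (mu p x.1.2) x.2.2.
have Eh' : forall p, h p = \sum_(x <- lu) lV (mu p x.1.2) (pi x.2.2).
  by move=> p; rewrite Eh big_map.
exists f; split; first by apply: SpanF_sum => x _; apply: BHOM_qu.
split.
  apply: functional_extensionality => p.
  rewrite Eh' /f (sum_morph pi_add); apply: eq_bigr => x _; exact: pi_lin.
move=> s Hs.
pose c (x : (G * Q) * (G * U)) := gm x.1.1 x.2.1.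
pose fr := fun p => \sum_(x <- lu | ~~ eqG (c x) s) lU (mu p x.1.2) x.2.2.
have fr_add : forall p p', fr (p + p') = fr p + fr p'.
  move=> p p'; rewrite /fr -big_split /=; apply: eq_bigr => x _.
  by rewrite mu_addp lU_adda.
have fr_lhom : is_lhom lP lU fr.
  split => // a p; rewrite /fr (sum_morph (lU_addm a)); apply: eq_bigr => x _.
  by rewrite mu_lP lU_mul.
have fr_th : forall t p, grP t p -> torsion lU (fr p).
  move=> t p Hp; apply/hpik.
  pose lt := map (fun x => (gm t (c x), lV (mu p x.1.2) (pi x.2.2))) lu.
  have Hlt : forall y, List.In y lt -> grV y.1 y.2.
    move=> y Hin; case: (In_map Hin) => x [Hx ->] /=.
    case: (Hlu x Hx) => Hq Hu.
    rewrite /c gmulA -(gmul1 x.2.1); apply: lV_gr; first by apply: mu_gr.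
    exact: hpig.
  have Hst : grV (gm t s) (\sum_(y <- lt) y.2).
    by rewrite big_map /= -Eh'; apply: Hs.
  have := key gVz gVs grVuniq Hlt Hst.
  rewrite big_map /= /fr (sum_morph pi_add) => H0.
  rewrite -[X in _ = X]H0; apply: eq_big => [x|x _]; first by rewrite eqG_cancel.
  exact: pi_lin.
have fr_t : forall p, torsion lU (fr p).
  move=> p; case: (grPdec p) => lp [Hlp ->]; rewrite (sum_morph fr_add) => a.
  rewrite (sum_morph (lU_addm a)); apply: sum_In0 => y Hy.
  exact: (fr_th _ _ (Hlp y Hy)).
have fr0 := tors0 fr_lhom fr_t.
move=> t p Hp.
have -> : f p = \sum_(x <- lu | eqG (c x) s) lU (mu p x.1.2) x.2.2.
  by rewrite /f (bigID (fun x => eqG (c x) s)) /= -/(fr p) fr0 addr0.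
apply: gr_sum => // x Hx /eqGP Ec.
case: (Hlu x Hx) => Hq Hu.
rewrite -Ec /c gmulA; apply: lU_gr => //; exact: mu_gr.
Qed.

Lemma main_iso : exists (phi : (P -> U) -> (P -> V)) (psi : (P -> V) -> (P -> U)),
    graded_Bmod_iso g rP grP grU grV BH_U BH_V phi psi.
Proof.
pose Sp h f := BH_U f /\ (fun p => pi (f p)) = h /\
   forall s, graded_deg g grP grV h s -> graded_deg g grP grU f s.
pose psi h := epsilon (inhabits (fun _ : P => (0 : U))) (Sp h).
have spec : forall h, BH_V h -> Sp h (psi h).
  by move=> h Hh; apply: epsilon_spec; apply: exist_lift.
have pw : forall h f, Sp h f -> forall p, pi (f p) = h p.
  by move=> h f [_ [E _]] p; rewrite -E.
exists (fun f p => pi (f p)), psi.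
split; first exact: phi_BHOM.
split; first by move=> h /spec [].
split.
  move=> f Hf; have S := spec _ (phi_BHOM Hf).
  apply: inj => //; first by case: S.
  by move=> p; rewrite (pw _ _ S).
split; first by move=> h /spec [_ []].
split.
  move=> f f' _ _; apply: functional_extensionality => p; exact: pi_add.
split.
  move=> h h' Hh Hh'.
  have S := spec _ (BHOM_add Hh Hh'); have S1 := spec _ Hh; have S2 := spec _ Hh'.
  apply: inj; [by case: S | by apply: BHOM_add; [case: S1 | case: S2] |].
  by move=> p; rewrite (pw _ _ S) pi_add (pw _ _ S1) (pw _ _ S2).
split; first by [].
split.
  move=> b h Hh.
  have S := spec _ (BHOM_Bact b Hh); have S1 := spec _ Hh.
  apply: inj; [by case: S | by apply: BHOM_Bact; case: S1 |].
  by move=> p; rewrite (pw _ _ S) /Bact (pw _ _ S1).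
split.
  move=> s f _ Hf t p Hp; rewrite -(gmul1 (gm t s)); apply: hpig; exact: Hf.
move=> s h Hh; have [_ [_ H]] := spec _ Hh; exact: H.
Qed.
End Main.

Unset Implicit Arguments.

Theorem corollary5p5
    (G : Type) (g : group_law G)
    (A : zmodType) (grA : G -> A -> Prop) (mulA : A -> A -> A)
    (B : zmodType) (grB : G -> B -> Prop) (mulB : B -> B -> B)
    (P : zmodType) (grP : G -> P -> Prop) (lP : A -> P -> P) (rP : P -> B -> P)
    (Q : zmodType) (grQ : G -> Q -> Prop) (lQ : B -> Q -> Q) (rQ : Q -> A -> Q)
    (mu : P -> Q -> A) (nu : Q -> P -> B)
    (hA : is_graded_ring g grA mulA) (hAi : idempotent_ring mulA)
    (hB : is_graded_ring g grB mulB) (hBi : idempotent_ring mulB)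
    (hP : is_unital_graded_bimod g grA mulA grB mulB grP lP rP)
    (hQ : is_unital_graded_bimod g grB mulB grA mulA grQ lQ rQ)
    (hM : graded_morita_context g grA mulA grB mulB grP lP rP grQ lQ rQ mu nu)
    (hmu : mu_surjective mu) (hnu : mu_surjective nu)
    (U : zmodType) (grU : G -> U -> Prop) (lU : A -> U -> U)
    (hU : is_graded_lmod g grA mulA grU lU) (hUu : lunital lU)
    (V : zmodType) (grV : G -> V -> Prop) (lV : A -> V -> V)
    (hV : is_graded_lmod g grA mulA grV lV)
    (pi : U -> V) (hpi : is_lhom lU lV pi) (hpig : graded_deg g grU grV pi (gunit g))
    (hpis : forall v : V, exists u : U, pi u = v)
    (hpik : forall u : U, pi u = 0 <-> torsion lU u) :
  exists (phi : (P -> U) -> (P -> V)) (psi : (P -> V) -> (P -> U)),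
    graded_Bmod_iso g rP grP grU grV
      (BHOM g lP rP lU grP grU) (BHOM g lP rP lV grP grV) phi psi.
Proof.
case: hP => [[[_ [grPdec _]] _] [[_ [rP_adp [rP_adb [rP_mul _]]]] [lP_comp [P_lunit _]]]].
case: hQ => [[[_ [grQdec _]] _] [_ [_ [Q_lunit _]]]].
case: hM => [mu_addp [mu_addq [mu_rP [mu_lP [_ [mu_gr [_ [_ [_ [_ [_ [_ [assocP _]]]]]]]]]]]]].
case: hU => [[grUz [grUdec _]] [lU_addm [lU_adda [lU_mul lU_gr]]]].
case: hV => [[grVz [grVdec grVuniq]] [lV_addm [lV_adda [_ lV_gr]]]].
case: hpi => [pi_add pi_lin].
exact: (main_iso grPdec grQdec grUdec grVdec grUz grVz grVuniq rP_adp rP_adb rP_mul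
  lP_comp P_lunit Q_lunit mu_addp mu_addq mu_rP mu_lP mu_gr assocP hnu
  lU_addm lU_adda lU_mul lU_gr lV_addm lV_adda lV_gr pi_add pi_lin hpig hpis hpik).
Qed.
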